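(* Consider the cone percolation process on $\mathbb{T}_d$ ($d\ge2$) with $\mathbb{P}(R=k)=(1-p)p^k$, $k=0,1,2,\dots$, where $p\in(0,1)$. If $dp^2-2dp+1<0$ then $\mathbb{P}[V]>0$; if $2pd\le 1$ then $\mathbb{P}[V]=0$.
   Context: Let $d\ge 2$ and let $\mathbb{T}_d$ be the infinite tree in which every vertex has exactly $d+1$ neighbours. Fix a vertex $\mathcal{O}$ (the origin); $d(u,v)$ denotes graph distance. Write $u\le v$ if $u$ lies on the path from $\mathcal{O}$ to $v$ (so $\mathcal{O}\le v$ for all $v$). Let $R$ be a random variable with values in $\{0,1,2,\dots\}$. Cone percolation on $\mathbb{T}_d$: to each vertex $u$ attach an independent copy $R_u$ of $R$; let $B_u=\{v: u\le v,\ d(u,v)\le R_u\}$; set $I_0=\{\mathcal{O}\}$, $I_{n+1}=\bigcup_{u\in I_n}B_u$, $I=\bigcup_{n\ge0}I_n$, and let $V=\{|I|=\infty\}$; $\mathbb{P}$ is the probability measure of this process. *)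

(* Defs.v *)
From Stdlib Require Import Reals List Arith.
Import ListNotations.
Open Scope R_scope.

Record ProbSpace := {
  Omega : Type;
  meas : (Omega -> Prop) -> Prop;
  Pr : (Omega -> Prop) -> R;
  meas_full : meas (fun _ => True);
  meas_compl : forall A, meas A -> meas (fun w => ~ A w);
  meas_cunion : forall A : nat -> Omega -> Prop,
      (forall n, meas (A n)) -> meas (fun w => exists n, A n w);
  Pr_nonneg : forall A, meas A -> 0 <= Pr A;
  Pr_full : Pr (fun _ => True) = 1;
  Pr_ext : forall A B, (forall w, A w <-> B w) -> Pr A = Pr B;
  Pr_sigma_additive : forall A : nat -> Omega -> Prop,
      (forall n, meas (A n)) ->
      (forall i j w, i <> j -> A i w -> A j w -> False) ->
      Un_cv (fun n => sum_f_R0 (fun i => Pr (A i)) n)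
            (Pr (fun w => exists n, A n w))
}.

(** A vertex is encoded by the list of child indices on the path from the
    origin, in leaf-to-root order (the head is the last step).  The origin
    is [[]]; the origin has d+1 children (indices 0..d), every other vertex
    has d children (indices 0..d-1), so every vertex has degree d+1. *)
Fixpoint valid (d : nat) (v : list nat) : Prop :=
  match v with
  | [] => True
  | i :: w => valid d w /\ (i < (match w with [] => S d | _ => d end))%nat
  end.

Definition tle (u v : list nat) : Prop := exists w, v = w ++ u.

(** graph distance between u and v when u <= v *)
Definition tdist (u v : list nat) : nat := (length v - length u)%nat.

Definition cone (d : nat) (r : nat) (u v : list nat) : Prop :=
  valid d v /\ tle u v /\ (tdist u v <= r)%nat.

Section Cone.
Variable d : nat.
Variable Om : Type.
Variable Rad : list nat -> Om -> nat.

Fixpoint In_set (n : nat) (w : Om) (v : list nat) : Prop :=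
  match n with
  | O => v = []
  | S m => exists u, In_set m w u /\ cone d (Rad u w) u v
  end.

Definition I_set (w : Om) (v : list nat) : Prop := exists n, In_set n w v.

Definition V_event (w : Om) : Prop :=
  forall l : list (list nat), exists v, I_set w v /\ ~ List.In v l.
End Cone.

Definition iid_geometric (S : ProbSpace) (d : nat) (p : R)
    (Rad : list nat -> Omega S -> nat) : Prop :=
  (forall u k, meas S (fun w => Rad u w = k)) /\
  (forall (ks : list nat) (vs : list (list nat)),
      NoDup vs -> Forall (valid d) vs -> length vs = length ks ->
      Pr S (fun w => Forall2 (fun u k => Rad u w = k) vs ks) =
      fold_right Rmult 1 (map (fun k => (1 - p) * p ^ k) ks)).

(* Main.v *)
Require Import Defs.
From Stdlib Require Import Reals List Arith Lra Lia Classical ClassicalEpsilon FunctionalExtensionality PropExtensionality.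
Open Scope R_scope.

Module M1.
Import ListNotations.
Open Scope R_scope.
Open Scope R_scope.

Section Meas.
Variable Sp : ProbSpace.
Notation ev := (Omega Sp -> Prop).

Lemma meas_ext (A B : ev) : meas Sp A -> (forall w, A w <-> B w) -> meas Sp B.
Proof.
  intros HA H. assert (A = B) as <-; auto.
  apply functional_extensionality; intro w; apply propositional_extensionality; auto.
Qed.

Lemma meas_False : meas Sp (fun _ => False).
Proof. eapply meas_ext. apply meas_compl, meas_full. intros; tauto. Qed.

Lemma meas_or (A B : ev) : meas Sp A -> meas Sp B -> meas Sp (fun w => A w \/ B w).
Proof.
  intros HA HB.
  eapply meas_ext. apply (meas_cunion Sp (fun n => match n with 0 => A | 1 => B | _ => fun _ => False end)).
  intros [|[|n]]; auto using meas_False.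
  intro w; split. intros [[|[|n]] H]; tauto. intros [H|H]; [exists 0%nat|exists 1%nat]; auto.
Qed.

Lemma meas_not (A : ev) : meas Sp A -> meas Sp (fun w => ~ A w).
Proof. apply meas_compl. Qed.

Lemma meas_and (A B : ev) : meas Sp A -> meas Sp B -> meas Sp (fun w => A w /\ B w).
Proof.
  intros HA HB. eapply meas_ext. apply (meas_not (fun w => ~ A w \/ ~ B w)), meas_or; apply meas_not; auto.
  intro w; split; [intro H; split; apply NNPP; intro; apply H; auto | tauto].
Qed.

Lemma meas_ex (A : nat -> ev) : (forall n, meas Sp (A n)) -> meas Sp (fun w => exists n, A n w).
Proof. apply meas_cunion. Qed.

Lemma meas_all (A : nat -> ev) : (forall n, meas Sp (A n)) -> meas Sp (fun w => forall n, A n w).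
Proof.
  intros H. eapply meas_ext. apply meas_not, meas_ex. intro n; apply meas_not, H.
  intro w; split. intros H1 n. apply NNPP; intro; apply H1; eauto.
  intros H1 [n Hn]; auto.
Qed.

Lemma Pr_False : Pr Sp (fun _ => False) = 0.
Proof.
  pose proof (Pr_sigma_additive Sp (fun _ _ => False) (fun _ => meas_False) (fun _ _ _ _ H _ => H)) as H.
  cbv beta in H. set (c := Pr Sp (fun _ => False)) in *.
  assert (Hc : 0 <= c) by (apply Pr_nonneg, meas_False).
  assert (Hext : Pr Sp (fun w => exists n : nat, (fun _ _ => False) n w) = c) by (apply Pr_ext; intros; split; [intros [_ []]|tauto]).
  cbv beta in H, Hext. rewrite Hext in H.
  assert (Hs : forall n, sum_f_R0 (fun _ => c) n = INR (S n) * c).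
  { induction n; simpl sum_f_R0. simpl; lra. rewrite IHn, !S_INR; lra. }
  destruct (Rle_lt_or_eq_dec 0 c Hc) as [Hp|]; [|auto].
  destruct (H c Hp) as [N HN]. specialize (HN (S N) ltac:(lia)).
  rewrite Hs in HN. unfold R_dist in HN. rewrite !S_INR in HN.
  pose proof (pos_INR N).
  rewrite Rabs_right in HN; nra.
Qed.

Lemma sum_eventually (f : nat -> R) N : (forall n, (n > N)%nat -> f n = 0) ->
  forall n, (n >= N)%nat -> sum_f_R0 f n = sum_f_R0 f N.
Proof.
  intros Hf n Hn. induction Hn. auto. simpl. rewrite IHHn, Hf; [ring|lia].
Qed.

Lemma Pr_finite_union (A : nat -> ev) N : (forall n, meas Sp (A n)) ->
  (forall i j w, i <> j -> A i w -> A j w -> False) ->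
  (forall n w, (n > N)%nat -> ~ A n w) ->
  Pr Sp (fun w => exists n, A n w) = sum_f_R0 (fun i => Pr Sp (A i)) N.
Proof.
  intros HM HD HN.
  pose proof (Pr_sigma_additive Sp A HM HD) as H.
  eapply UL_sequence. apply H.
  intros e He. exists N. intros n Hn. rewrite sum_eventually with (N:=N); auto.
  unfold R_dist; rewrite Rminus_diag, Rabs_R0; auto.
  intros m Hm. rewrite <- Pr_False. apply Pr_ext. intro w; split; [apply HN; lia|tauto].
Qed.

Lemma Pr_add (A B : ev) : meas Sp A -> meas Sp B -> (forall w, A w -> B w -> False) ->
  Pr Sp (fun w => A w \/ B w) = Pr Sp A + Pr Sp B.
Proof.
  intros HA HB HD.
  set (F := fun n => match n with 0 => A | 1 => B | _ => fun _ => False end).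
  transitivity (Pr Sp (fun w => exists n, F n w)).
  apply Pr_ext; intro w; split. intros [H|H]; [exists 0%nat|exists 1%nat]; auto.
  intros [[|[|n]] H]; simpl in H; tauto.
  rewrite Pr_finite_union with (N := 1%nat). simpl; ring.
  intros [|[|n]]; simpl; auto using meas_False.
  intros [|[|i]] [|[|j]] w Hij; simpl; try tauto; try lia; eauto.
  intros [|[|n]] w Hn; simpl; auto; lia.
Qed.

Lemma Pr_compl (A : ev) : meas Sp A -> Pr Sp (fun w => ~ A w) = 1 - Pr Sp A.
Proof.
  intros HA. rewrite <- (Pr_full Sp).
  rewrite (Pr_ext Sp (fun _ => True) (fun w => A w \/ ~ A w)) by (intro; tauto).
  rewrite Pr_add; auto using meas_not. ring.
Qed.

Lemma Pr_mono (A B : ev) : meas Sp A -> meas Sp B -> (forall w, A w -> B w) -> Pr Sp A <= Pr Sp B.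
Proof.
  intros HA HB H.
  rewrite (Pr_ext Sp B (fun w => A w \/ (B w /\ ~ A w))).
  assert (Hm : meas Sp (fun w => B w /\ ~ A w)) by (apply meas_and; auto using meas_not).
  rewrite Pr_add; auto. pose proof (Pr_nonneg Sp _ Hm). lra.
  tauto.
  intro w; split. intros Hb. destruct (classic (A w)); tauto. intros [|[]]; auto.
Qed.

Lemma Pr_le1 (A : ev) : meas Sp A -> Pr Sp A <= 1.
Proof. intros. rewrite <- (Pr_full Sp). apply Pr_mono; auto using meas_full. Qed.

Lemma Pr_cont_below (B : nat -> ev) : (forall n, meas Sp (B n)) -> (forall n w, B n w -> B (S n) w) ->
  Un_cv (fun n => Pr Sp (B n)) (Pr Sp (fun w => exists n, B n w)).
Proof.
  intros HM Hinc.
  set (A := fun n w => match n with 0 => B 0%nat w | S m => B (S m) w /\ ~ B m w end).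
  assert (HAm : forall n, meas Sp (A n)) by (intros [|n]; simpl; [apply HM| apply meas_and; [apply HM|apply meas_not, HM]]).
  assert (Hle : forall m n w, (m <= n)%nat -> B m w -> B n w) by (intros m n w H; induction H; auto).
  assert (HAD : forall i j w, i <> j -> A i w -> A j w -> False).
  { intros i j w Hij. 
    assert (forall i j, (i < j)%nat -> A i w -> A j w -> False).
    { intros [|a] [|b] Hab; simpl; try lia. intros H1 [_ H2]; apply H2; eapply Hle; [|eauto]; lia.
      intros [H1 _] [_ H2]; apply H2; eapply Hle; [|eauto]; lia. }
    destruct (Nat.lt_gt_cases i j) as [[H1|H1] _]; eauto. }
  assert (Hsum : forall n, sum_f_R0 (fun i => Pr Sp (A i)) n = Pr Sp (B n)).
  { induction n. reflexivity. simpl. rewrite IHn.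
    rewrite (Pr_ext Sp (B (S n)) (fun w => B n w \/ A (S n) w)).
    rewrite Pr_add; auto. intros w H1 [_ H2]; auto.
    intro w; simpl; split. intros H. destruct (classic (B n w)); tauto. intros [|[]]; auto. }
  pose proof (Pr_sigma_additive Sp A HAm HAD) as H.
  rewrite (Pr_ext Sp (fun w => exists n, B n w) (fun w => exists n, A n w)).
  intros e He. destruct (H e He) as [N HN]. exists N. intros n Hn. rewrite <- Hsum. auto.
  intro w; split.
  - intros [n Hn]. induction n. exists 0%nat; auto.
    destruct (classic (B n w)) as [Hb|Hb]; auto. exists (S n); simpl; auto.
  - intros [[|n] Hn]; simpl in Hn; [exists 0%nat|exists (S n)]; tauto.
Qed.

End Meas.

End M1.
Import M1.

Module M2.
Import ListNotations.
Open Scope R_scope.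
Import ListNotations.
Open Scope R_scope.

Section Cyl.
Variable Sp : ProbSpace.
Variable d : nat.
Variable p : R.
Variable Rad : list nat -> Omega Sp -> nat.
Variable N : nat.
Hypothesis Hp : 0 < p < 1.
Hypothesis HN : (1 <= N)%nat.
Hypothesis Hiid : iid_geometric Sp d p Rad.

Definition tr (u : list nat) (w : Omega Sp) : nat := Nat.min (Rad u w) N.
Definition q (k : nat) : R := if (k <? N)%nat then (1 - p) * p ^ k else p ^ N.

Fixpoint EW (f : nat -> R) (j m : nat) : R :=
  match m with
  | O => p ^ j * f j
  | S m' => (1 - p) * p ^ j * f j + EW f (S j) m'
  end.

Fixpoint mu (n : nat) (Phi : list nat -> Prop) : R :=
  match n with
  | O => if excluded_middle_informative (Phi []) then 1 else 0
  | S n' => EW (fun k => mu n' (fun ks => Phi (k :: ks))) 0 N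
  end.

Definition Cons (cs : list (list nat * nat)) (w : Omega Sp) : Prop :=
  Forall (fun c => tr (fst c) w = snd c) cs.

Definition prodq (cs : list (list nat * nat)) : R := fold_right Rmult 1 (map (fun c => q (snd c)) cs).

Lemma prodq_app c1 c2 : prodq (c1 ++ c2) = prodq c1 * prodq c2.
Proof. unfold prodq. induction c1; simpl. ring. rewrite IHc1; ring. Qed.

Lemma prodq_mid c1 c2 u k : prodq (c1 ++ (u, k) :: c2) = prodq (c1 ++ c2) * q k.
Proof. rewrite !prodq_app. unfold prodq; simpl. ring. Qed.

Lemma meas_rad (u : list nat) (P : nat -> Prop) : meas Sp (fun w => P (Rad u w)).
Proof.
  eapply meas_ext. apply (meas_ex Sp (fun j w => P j /\ Rad u w = j)).
  intro j. destruct (classic (P j)) as [H|H].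
  eapply meas_ext. apply (proj1 Hiid u j). intro w; tauto.
  eapply meas_ext. apply meas_False. intro w; tauto.
  intro w; split. intros [j [H1 <-]]; auto. intros; eauto.
Qed.

Lemma meas_cyl (us : list (list nat)) : forall (Phi : list nat -> Prop),
  meas Sp (fun w => Phi (map (fun u => Rad u w) us)).
Proof.
  induction us as [|u us IH]; intros Phi; simpl.
  destruct (classic (Phi [])). eapply meas_ext. apply meas_full. tauto.
  eapply meas_ext. apply meas_False. tauto.
  eapply meas_ext. apply (meas_ex Sp (fun j w => Rad u w = j /\ Phi (j :: map (fun u => Rad u w) us))).
  intro j. apply meas_and. apply (meas_rad u (fun r => r = j)). apply (IH (fun ks => Phi (j :: ks))).
  intro w; split. intros [j [<- H]]; auto. intros; eauto.
Qed.

Lemma meas_cyl_tr (us : list (list nat)) (Phi : list nat -> Prop) :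
  meas Sp (fun w => Phi (map (fun u => tr u w) us)).
Proof.
  eapply meas_ext. apply (meas_cyl us (fun ks => Phi (map (fun r => Nat.min r N) ks))).
  intro w. cbv beta. rewrite map_map. reflexivity.
Qed.

Lemma meas_Cons cs : meas Sp (Cons cs).
Proof.
  induction cs as [|c cs IH]; unfold Cons.
  eapply meas_ext. apply meas_full. intro; split; auto.
  eapply meas_ext. apply meas_and. apply (meas_rad (fst c) (fun r => Nat.min r N = snd c)). apply IH.
  intro w. rewrite Forall_cons_iff. reflexivity.
Qed.

Lemma tr_le u w : (tr u w <= N)%nat.
Proof. unfold tr; lia. Qed.

Definition cntN (cs : list (list nat * nat)) : nat := length (filter (fun c => Nat.eqb (snd c) N) cs).

Lemma cntN_app c1 c2 : cntN (c1 ++ c2) = (cntN c1 + cntN c2)%nat.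
Proof. unfold cntN. rewrite filter_app, length_app. auto. Qed.

Lemma atoms_noN cs : Forall (fun c => snd c < N)%nat cs ->
  NoDup (map fst cs) -> Forall (valid d) (map fst cs) -> Pr Sp (Cons cs) = prodq cs.
Proof.
  intros Hlt Hnd Hv.
  rewrite (Pr_ext Sp (Cons cs) (fun w => Forall2 (fun u k => Rad u w = k) (map fst cs) (map snd cs))).
  rewrite (proj2 Hiid); auto. unfold prodq. rewrite map_map.
  clear - Hlt. induction cs; simpl; auto. inversion Hlt; subst. f_equal; auto.
  unfold q. destruct (Nat.ltb_spec (snd a) N); auto; lia.
  rewrite !length_map; auto.
  intro w. unfold Cons. clear - Hlt. induction cs as [|a cs IHcs]; simpl. split; auto.
  inversion Hlt as [|? ? Ha Hb]; subst. rewrite Forall_cons_iff, IHcs by auto. split.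
  intros [Hx Hy]; constructor; auto. unfold tr in Hx; lia.
  intros Hx; inversion Hx; subst; split; auto. unfold tr; lia.
Qed.

Lemma Cons_mid c1 c2 u k w : Cons (c1 ++ (u, k) :: c2) w <-> Cons (c1 ++ c2) w /\ tr u w = k.
Proof. unfold Cons. rewrite !Forall_app, Forall_cons_iff. simpl. tauto. Qed.

Lemma qN : q N = p ^ N.
Proof. unfold q. rewrite Nat.ltb_irrefl. auto. Qed.

Lemma qlt k : (k < N)%nat -> q k = (1 - p) * p ^ k.
Proof. intros. unfold q. destruct (Nat.ltb_spec k N); auto; lia. Qed.

Lemma atoms_all : forall n cs, (cntN cs <= n)%nat -> Forall (fun c => snd c <= N)%nat cs ->
  NoDup (map fst cs) -> Forall (valid d) (map fst cs) -> Pr Sp (Cons cs) = prodq cs.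
Proof.
  induction n; intros cs Hc Hle Hnd Hv;
  (destruct (classic (exists u, In (u, N) cs)) as [[u Hin]|Hno];
   [|apply atoms_noN; auto; rewrite Forall_forall in *; intros [u k] Hin;
     specialize (Hle _ Hin); simpl in *; destruct (Nat.eq_dec k N); [subst; exfalso; eauto|lia]]);
  destruct (in_split _ _ Hin) as [c1 [c2 ->]];
  rewrite cntN_app in Hc; unfold cntN at 2 in Hc; simpl filter in Hc; rewrite Nat.eqb_refl in Hc; simpl length in Hc; fold (cntN c2) in Hc; [lia|].
  rewrite map_app in Hnd, Hv. simpl in Hnd, Hv.
  assert (Hnd' : forall k, NoDup (map fst (c1 ++ (u, k) :: c2))) by (intro; rewrite map_app; auto).
  assert (Hv' : forall k, Forall (valid d) (map fst (c1 ++ (u, k) :: c2))) by (intro; rewrite map_app; auto).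
  assert (Hnd0 : NoDup (map fst (c1 ++ c2))) by (rewrite map_app; eapply NoDup_remove_1; eauto).
  assert (Hv0 : Forall (valid d) (map fst (c1 ++ c2))).
  { rewrite map_app. rewrite Forall_app, Forall_cons_iff in Hv. apply Forall_app; tauto. }
  assert (Hle0 : Forall (fun c => snd c <= N)%nat (c1 ++ c2)).
  { rewrite Forall_app, Forall_cons_iff in Hle. apply Forall_app; tauto. }
  assert (Hle' : forall k, (k <= N)%nat -> Forall (fun c => snd c <= N)%nat (c1 ++ (u, k) :: c2)).
  { intros k Hk. rewrite Forall_app, Forall_cons_iff in Hle. apply Forall_app; split; [tauto|constructor; simpl; [lia|tauto]]. }
  set (P0 := prodq (c1 ++ c2)).
  assert (HF : forall j, (j <= N)%nat -> Pr Sp (fun w => Cons (c1 ++ c2) w /\ (j <= tr u w)%nat) = P0 * p ^ j).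
  { induction j; intros Hj.
    - rewrite (Pr_ext Sp _ (Cons (c1 ++ c2))) by (intro; split; [tauto|split; [auto|lia]]).
      simpl. rewrite Rmult_1_r. apply IHn; auto. rewrite cntN_app in *; lia.
    - assert (HE : Pr Sp (Cons (c1 ++ (u, j) :: c2)) = P0 * ((1 - p) * p ^ j)).
      { rewrite IHn; auto. rewrite prodq_mid, qlt by lia. auto.
        rewrite cntN_app; unfold cntN at 2; simpl filter. destruct (Nat.eqb_spec j N); [lia|]. unfold cntN in *. simpl length. lia. apply Hle'; lia. }
      assert (Hsplit : Pr Sp (fun w => Cons (c1 ++ c2) w /\ (j <= tr u w)%nat) =
         Pr Sp (Cons (c1 ++ (u, j) :: c2)) + Pr Sp (fun w => Cons (c1 ++ c2) w /\ (S j <= tr u w)%nat)).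
      { rewrite <- Pr_add. apply Pr_ext. intro w. rewrite Cons_mid. split.
        intros [H1 H2]. destruct (Nat.eq_dec (tr u w) j); [left|right]; split; auto; lia.
        intros [[H1 H2]|[H1 H2]]; split; auto; lia.
        apply meas_Cons. apply meas_and. apply meas_Cons. apply (meas_rad u (fun r => S j <= Nat.min r N)%nat).
        intros w H1 [H2 H3]. rewrite Cons_mid in H1. lia. }
      rewrite IHj in Hsplit by lia. rewrite HE in Hsplit. simpl. lra. }
  rewrite (Pr_ext Sp _ (fun w => Cons (c1 ++ c2) w /\ (N <= tr u w)%nat)).
  rewrite HF by lia. rewrite prodq_mid, qN. auto.
  intro w. rewrite Cons_mid. pose proof (tr_le u w). split; intros [H1 H2]; split; auto; lia.
Qed.

Lemma atoms cs : Forall (fun c => snd c <= N)%nat cs ->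
  NoDup (map fst cs) -> Forall (valid d) (map fst cs) -> Pr Sp (Cons cs) = prodq cs.
Proof. apply (atoms_all (cntN cs)); auto. Qed.

Lemma cyl : forall us cs Phi, Forall (fun c => snd c <= N)%nat cs ->
  NoDup (map fst cs ++ us) -> Forall (valid d) (map fst cs ++ us) ->
  Pr Sp (fun w => Cons cs w /\ Phi (map (fun u => tr u w) us)) = prodq cs * mu (length us) Phi.
Proof.
  induction us as [|u us IH]; intros cs Phi Hle Hnd Hv.
  - simpl. rewrite app_nil_r in Hnd, Hv.
    destruct (excluded_middle_informative (Phi [])) as [H|H].
    + rewrite (Pr_ext Sp _ (Cons cs)) by (intro; tauto). rewrite atoms; auto. ring.
    + rewrite (Pr_ext Sp _ (fun _ => False)) by (intro; tauto). rewrite Pr_False. ring.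
  - set (g := fun k => mu (length us) (fun ks => Phi (k :: ks))).
    assert (Hnd' : forall k, NoDup (map fst (cs ++ [(u, k)]) ++ us)) by
      (intro; rewrite map_app, <- app_assoc; auto).
    assert (Hv' : forall k, Forall (valid d) (map fst (cs ++ [(u, k)]) ++ us)) by
      (intro; rewrite map_app, <- app_assoc; auto).
    assert (Hle' : forall k, (k <= N)%nat -> Forall (fun c => snd c <= N)%nat (cs ++ [(u, k)])) by
      (intros; apply Forall_app; split; auto).
    assert (Hcons1 : forall k w, Cons (cs ++ [(u, k)]) w <-> Cons cs w /\ tr u w = k).
    { intros k w. unfold Cons. rewrite Forall_app. simpl. rewrite Forall_cons_iff. simpl.
      split; [tauto|]. intros [H1 H2]; repeat split; auto. }
    assert (Hterm : forall k, (k <= N)%nat -> Pr Sp (fun w => (Cons cs w /\ tr u w = k) /\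
        Phi (k :: map (fun u => tr u w) us)) = prodq cs * q k * g k).
    { intros k Hk. transitivity (prodq (cs ++ [(u, k)]) * mu (length us) (fun ks => Phi (k :: ks))).
      rewrite <- IH; auto. apply Pr_ext. intro w; rewrite Hcons1; tauto.
      rewrite prodq_app. unfold prodq at 2; simpl. unfold g. ring. }
    assert (Hm : forall m j, (j + m)%nat = N ->
      Pr Sp (fun w => Cons cs w /\ (j <= tr u w)%nat /\ Phi (tr u w :: map (fun u => tr u w) us)) =
      prodq cs * EW g j m).
    { induction m; intros j Hj.
      - rewrite (Pr_ext Sp _ (fun w => (Cons cs w /\ tr u w = N) /\ Phi (N :: map (fun u => tr u w) us))).
        rewrite Hterm by lia. simpl. rewrite qN. replace j with N by lia. ring.
        intro w. pose proof (tr_le u w) as Hl. split. intros [H1 [H2 H3]]. assert (E : tr u w = N) by lia.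
        rewrite <- E. tauto. intros [[H1 H2] H3]. rewrite H2. repeat split; auto; lia.
      - rewrite (Pr_ext Sp _ (fun w => ((Cons cs w /\ tr u w = j) /\ Phi (j :: map (fun u => tr u w) us)) \/
           (Cons cs w /\ (S j <= tr u w)%nat /\ Phi (tr u w :: map (fun u => tr u w) us)))).
        rewrite Pr_add. rewrite Hterm, IHm by lia. simpl. rewrite qlt by lia. ring.
        + apply meas_and. apply meas_and. apply meas_Cons. apply (meas_rad u (fun r => Nat.min r N = j)).
          apply (meas_cyl_tr us (fun ks => Phi (j :: ks))).
        + apply meas_and. apply meas_Cons.
          eapply meas_ext. apply (meas_cyl_tr (u :: us) (fun ks => match ks with k :: ks' => (S j <= k)%nat /\ Phi (k :: ks') | [] => False end)).
          intro w; simpl; tauto.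
        + intros w [[_ H1] _] [_ [H2 _]]. lia.
        + intro w. split.
          * intros [H1 [H2 H3]]. destruct (Nat.eq_dec (tr u w) j) as [E|E].
            left. rewrite <- E. tauto. right. repeat split; auto; lia.
          * intros [[[H1 H2] H3]|[H1 [H2 H3]]]. subst. repeat split; auto. repeat split; auto; lia. }
    simpl length. simpl mu. fold g. rewrite <- (Hm N 0%nat) by lia. apply Pr_ext. intro w. simpl. split; [intros [H1 H2]; repeat split; auto; lia|tauto].
Qed.

End Cyl.

End M2.
Import M2.

Module M3.
Import ListNotations.
Open Scope R_scope.
Import ListNotations.
Open Scope R_scope.

Section MuAlg.
Variable p : R.
Variable N : nat.
Hypothesis Hp : 0 < p < 1.

Notation EW := (EW p).
Notation mu := (mu p N).

Lemma EW_ext f g j m : (forall k, f k = g k) -> EW f j m = EW g j m.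
Proof. revert j; induction m; intros j H; simpl; rewrite H; [|rewrite IHm]; auto. Qed.

Lemma EW_lin f g a b j m : EW (fun k => a * f k + b * g k) j m = a * EW f j m + b * EW g j m.
Proof. revert j; induction m; intros j; simpl; [|rewrite IHm; simpl]; ring. Qed.

Lemma EW_const c j m : EW (fun _ => c) j m = p ^ j * c.
Proof. revert j; induction m; intros j; simpl; [|rewrite IHm; simpl]; ring. Qed.

Lemma EW_mono f g j m : (forall k, f k <= g k) -> EW f j m <= EW g j m.
Proof.
  revert j; induction m; intros j H; simpl.
  apply Rmult_le_compat_l; auto. apply pow_le; lra.
  apply Rplus_le_compat; auto. apply Rmult_le_compat_l; auto.
  apply Rmult_le_pos. lra. apply pow_le; lra.
Qed.

Lemma EW_mono_ext f g j m : (forall k, (j <= k)%nat -> f k <= g k) -> EW f j m <= EW g j m.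
Proof.
  revert j; induction m; intros j H; simpl.
  apply Rmult_le_compat_l; auto. apply pow_le; lra.
  apply Rplus_le_compat. apply Rmult_le_compat_l; auto.
  apply Rmult_le_pos. lra. apply pow_le; lra.
  apply IHm. intros; apply H; lia.
Qed.

Lemma mu_ext n : forall Phi Psi, (forall ks, Phi ks <-> Psi ks) -> mu n Phi = mu n Psi.
Proof.
  induction n; intros Phi Psi H; simpl.
  destruct (excluded_middle_informative (Phi [])), (excluded_middle_informative (Psi [])); auto;
  exfalso; firstorder.
  apply EW_ext. intro k. apply IHn. intro; apply H.
Qed.

Lemma mu_True n : mu n (fun _ => True) = 1.
Proof.
  induction n; simpl. destruct (excluded_middle_informative True); tauto.
  rewrite (EW_ext _ (fun _ => 1)) by auto. rewrite EW_const. simpl; ring.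
Qed.

Lemma mu_not n : forall Phi, mu n (fun ks => ~ Phi ks) = 1 - mu n Phi.
Proof.
  induction n; intros Phi; simpl.
  destruct (excluded_middle_informative (~ Phi [])), (excluded_middle_informative (Phi [])); try tauto; ring.
  rewrite (EW_ext _ (fun k => 1 * 1 + (-1) * mu n (fun ks => Phi (k :: ks)))).
  rewrite EW_lin, EW_const. simpl; ring.
  intro k. rewrite IHn. ring.
Qed.

Lemma mu_nonneg n : forall Phi, 0 <= mu n Phi.
Proof.
  induction n; intros Phi; simpl. destruct (excluded_middle_informative _); lra.
  replace 0 with (EW (fun _ => 0) 0 N) by (rewrite EW_const; ring). apply EW_mono. auto.
Qed.

Lemma mu_le1 n Phi : mu n Phi <= 1.
Proof. pose proof (mu_not n Phi). pose proof (mu_nonneg n (fun ks => ~ Phi ks)). lra. Qed.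

Lemma mu_mono n : forall Phi Psi, (forall ks, Phi ks -> Psi ks) -> mu n Phi <= mu n Psi.
Proof.
  induction n; intros Phi Psi H; simpl.
  destruct (excluded_middle_informative (Phi [])), (excluded_middle_informative (Psi [])); try lra.
  exfalso; auto.
  apply EW_mono. intro k. apply IHn. auto.
Qed.

Lemma mu_and_prod a : forall b P Q,
  mu (a + b) (fun ks => P (firstn a ks) /\ Q (skipn a ks)) = mu a P * mu b Q.
Proof.
  induction a; intros b P Q; simpl.
  - destruct (excluded_middle_informative (P [])) as [H|H].
    rewrite Rmult_1_l. apply mu_ext. intro; simpl; tauto.
    rewrite Rmult_0_l. rewrite (mu_ext _ _ (fun ks => ~ True)). rewrite mu_not, mu_True; ring.
    simpl; tauto.
  - rewrite (EW_ext _ (fun k => mu b Q * mu a (fun ks => P (k :: ks)) + 0 * 0)).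
    rewrite EW_lin. ring.
    intro k. rewrite (IHa b (fun ks => P (k :: ks)) Q). ring.
Qed.

Lemma mu_or_prod a b P Q :
  mu (a + b) (fun ks => P (firstn a ks) \/ Q (skipn a ks)) = 1 - (1 - mu a P) * (1 - mu b Q).
Proof.
  rewrite <- !mu_not, <- mu_and_prod.
  rewrite (mu_ext _ _ (fun ks => ~ (~ P (firstn a ks) /\ ~ Q (skipn a ks)))).
  rewrite mu_not. ring.
  intro ks; tauto.
Qed.

End MuAlg.

End M3.
Import M3.

Module M4.
Import ListNotations.
Open Scope nat_scope.
Import ListNotations.

Section Tree.
Variable d : nat.
Variable Om : Type.
Variable Rad : list nat -> Om -> nat.

Fixpoint Xr (w : Om) (v : list nat) : nat :=
  match v with
  | [] => Rad [] w
  | i :: u => Nat.max (Xr w u - 1) (Rad (i :: u) w)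
  end.

Fixpoint Cov (w : Om) (v : list nat) : Prop :=
  match v with
  | [] => True
  | i :: u => Cov w u /\ 1 <= Xr w u
  end.

Lemma Xr_ge_Rad w u : Rad u w <= Xr w u.
Proof. destruct u; simpl; lia. Qed.

Lemma Xr_app w z u : Rad u w - length z <= Xr w (z ++ u).
Proof.
  induction z as [|i z IH]; simpl. rewrite Nat.sub_0_r. apply Xr_ge_Rad. lia.
Qed.

Lemma Cov_ext w z u : Cov w u -> length z <= Rad u w -> Cov w (z ++ u).
Proof.
  induction z as [|i z IH]; simpl; intros H1 H2; auto.
  split. apply IH; auto; lia. pose proof (Xr_app w z u). lia.
Qed.

Lemma valid_app z u : valid d (z ++ u) -> valid d u.
Proof. induction z as [|i z IH]; simpl; auto. intros [H _]; auto. Qed.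

Lemma Cov_app w z u : Cov w (z ++ u) -> Cov w u.
Proof. induction z as [|i z IH]; simpl; auto. intros [H _]; auto. Qed.

Lemma X_wit w : forall u k, k <= Xr w u -> exists z a, u = z ++ a /\ length z + k <= Rad a w.
Proof.
  induction u as [|i u IH]; intros k H.
  - exists [], []. simpl in *. split; auto; lia.
  - destruct (Nat.le_gt_cases k (Rad (i :: u) w)).
    + exists [], (i :: u). simpl. split; auto; lia.
    + assert (Hm: k <= Nat.max (Xr w u - 1) (Rad (i::u) w)) by exact H.
      destruct (IH (S k)) as [z [a [-> Ha]]]. lia.
      exists (i :: z), a. simpl. split; auto. lia.
Qed.

Lemma In_set_sound w : forall n v, In_set d Om Rad n w v -> valid d v /\ Cov w v.
Proof.
  induction n; intros v H; simpl in H.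
  - subst. simpl. auto.
  - destruct H as [u [Hu [Hv [[z ->] Hd]]]]. destruct (IHn u Hu) as [_ Hc].
    split; auto. apply Cov_ext; auto. unfold tdist in Hd. rewrite length_app in Hd. lia.
Qed.

Lemma In_set_complete w : forall L v, length v <= L -> valid d v -> Cov w v -> exists n, In_set d Om Rad n w v.
Proof.
  induction L; intros v Hl Hv Hc.
  - destruct v; simpl in Hl; [|lia]. exists 0%nat. reflexivity.
  - destruct v as [|i u]. exists 0%nat; reflexivity.
    simpl in Hc. destruct Hc as [Hc Hx].
    destruct (X_wit w u 1 Hx) as [z [a [-> Ha]]].
    assert (Hva : valid d a) by (apply (valid_app (i :: z)); auto).
    assert (Hca : Cov w a) by (apply (Cov_app w z); auto).
    destruct (IHL a) as [n Hn]; auto. simpl in Hl. rewrite length_app in Hl. lia.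
    exists (S n). simpl. exists a. split; auto. split; auto. split.
    exists (i :: z). reflexivity. unfold tdist. change (length ((i :: z) ++ a) - length a <= Rad a w). rewrite length_app. simpl length. lia.
Qed.

Lemma I_iff w v : I_set d Om Rad w v <-> valid d v /\ Cov w v.
Proof.
  split. intros [n H]. eapply In_set_sound; eauto.
  intros [H1 H2]. eapply In_set_complete; eauto.
Qed.

Definition E (n : nat) (w : Om) : Prop := exists v, valid d v /\ length v = n /\ Cov w v.

Lemma E_dec n w : E (S n) w -> E n w.
Proof.
  intros [[|i u] [Hv [Hl Hc]]]; simpl in *. lia.
  exists u. destruct Hv, Hc. repeat split; auto; lia.
Qed.

Fixpoint lv (k : nat) : list (list nat) :=
  match k with
  | O => [[]]
  | S k' => flat_map (fun u => map (fun i => i :: u) (seq 0 (S d))) (lv k')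
  end.

Lemma lv_complete : forall v, valid d v -> In v (lv (length v)).
Proof.
  induction v as [|i u IH]. simpl; auto. intros [Hu Hi].
  change (lv (length (i::u))) with (flat_map (fun u => map (fun i => i :: u) (seq 0 (S d))) (lv (length u))).
  apply in_flat_map. exists u. split; auto. apply in_map_iff. exists i. split; auto.
  apply in_seq. destruct u; lia.
Qed.

Definition allv (n : nat) : list (list nat) := flat_map lv (seq 0 (S n)).

Lemma allv_complete n v : valid d v -> length v <= n -> In v (allv n).
Proof.
  intros. apply in_flat_map. exists (length v). split. apply in_seq. lia. apply lv_complete; auto.
Qed.

Lemma valid_skipn k : forall v, valid d v -> valid d (skipn k v).
Proof.
  induction k; intros v H; simpl; auto. destruct v; simpl; auto. apply IHk. destruct H; auto.
Qed.

Lemma Cov_skipn w k : forall v, Cov w v -> Cov w (skipn k v).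
Proof.
  induction k; intros v H; simpl; auto. destruct v; simpl; auto. apply IHk. destruct H; auto.
Qed.

Lemma V_iff w : V_event d Om Rad w <-> forall n, E n w.
Proof.
  split.
  - intros HV n. destruct (HV (allv n)) as [v [HI Hn]].
    apply I_iff in HI. destruct HI as [Hv Hc].
    assert (n < length v). { destruct (Nat.le_gt_cases (length v) n); auto. exfalso; apply Hn, allv_complete; auto. }
    exists (skipn (length v - n) v). split. apply valid_skipn; auto. split.
    rewrite length_skipn. lia. apply Cov_skipn; auto.
  - intros HE l.
    set (n := S (fold_right Nat.max 0 (map (@length nat) l))).
    destruct (HE n) as [v [Hv [Hl Hc]]]. exists v. split. apply I_iff; auto.
    intro Hin. assert (length v <= fold_right Nat.max 0 (map (@length nat) l)).
    { clear - Hin. induction l; simpl in *. tauto. destruct Hin as [->|H]; [lia|]. specialize (IHl H); lia. }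
    unfold n in Hl. lia.
Qed.

End Tree.

End M4.
Import M4.

Module M5.
Import ListNotations.
Open Scope nat_scope.
Import ListNotations.
Open Scope nat_scope.

Section Trunc.
Variable Sp : ProbSpace.
Variable d : nat.
Variable Rad : list nat -> Omega Sp -> nat.
Variable N : nat.

Notation tr := (tr Sp Rad N).

Fixpoint XN (w : Omega Sp) (v : list nat) : nat :=
  match v with
  | [] => tr [] w
  | i :: u => Nat.max (XN w u - 1) (tr (i :: u) w)
  end.

Fixpoint CovN (w : Omega Sp) (v : list nat) : Prop :=
  match v with
  | [] => True
  | i :: u => CovN w u /\ 1 <= XN w u
  end.

Lemma XN_Xr w : forall u, length u <= N ->
  Nat.min (Xr (Omega Sp) Rad w u) (N - length u) = Nat.min (XN w u) (N - length u).
Proof.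
  induction u as [|i u IH]; intros Hl.
  - simpl. unfold M2.tr. lia.
  - simpl length in *. specialize (IH ltac:(lia)).
    change (Nat.min (Nat.max (Xr (Omega Sp) Rad w u - 1) (Rad (i :: u) w)) (N - S (length u)) =
            Nat.min (Nat.max (XN w u - 1) (Nat.min (Rad (i :: u) w) N)) (N - S (length u))).
    lia.
Qed.

Lemma Cov_CovN w : forall v, length v <= N -> (Cov (Omega Sp) Rad w v <-> CovN w v).
Proof.
  induction v as [|i u IH]; intros Hl; simpl. tauto.
  simpl in Hl. rewrite IH by lia. pose proof (XN_Xr w u ltac:(lia)). 
  split; intros [H1 H2]; split; auto; lia.
Qed.

Lemma CovN_app w z u : CovN w (z ++ u) -> CovN w u.
Proof. induction z as [|i z IH]; simpl; auto. intros [H _]; auto. Qed.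

Definition bch (v : list nat) : nat := match v with [] => S d | _ :: _ => d end.

Fixpoint GV (n : nat) (v : list nat) (r : nat) (w : Omega Sp) : Prop :=
  match n with
  | O => True
  | S m => 1 <= Nat.max r (tr v w) /\ exists i, i < bch v /\ GV m (i :: v) (Nat.max r (tr v w) - 1) w
  end.

Definition rin (w : Omega Sp) (v : list nat) : nat := match v with [] => 0 | _ :: u => XN w u - 1 end.

Lemma XN_rin w v : XN w v = Nat.max (rin w v) (tr v w).
Proof. destruct v; simpl; lia. Qed.

Lemma G_link w : forall n v, valid d v -> CovN w v ->
  (GV n v (rin w v) w <-> exists z, length z = n /\ valid d (z ++ v) /\ CovN w (z ++ v)).
Proof.
  induction n; intros v Hv Hc.
  - simpl. split; auto. intros _. exists []. simpl; auto.
  - simpl GV. rewrite <- XN_rin. split.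
    + intros [H1 [i [Hi HG]]].
      assert (Hvi : valid d (i :: v)) by (split; auto).
      assert (Hci : CovN w (i :: v)) by (split; auto).
      destruct (IHn (i :: v) Hvi Hci) as [H _]. destruct (H HG) as [z [Hz1 [Hz2 Hz3]]].
      exists (z ++ [i]). rewrite <- app_assoc. simpl. rewrite length_app. simpl. repeat split; auto. lia.
    + intros [z [Hz1 [Hz2 Hz3]]].
      destruct (exists_last (l := z)) as [z' [i ->]]. destruct z; simpl in Hz1; [lia|discriminate].
      rewrite <- app_assoc in Hz2, Hz3. simpl in Hz2, Hz3.
      pose proof (valid_app d z' _ Hz2) as [Hv' Hi]. pose proof (CovN_app w z' _ Hz3) as [Hc' Hx].
      split; auto. exists i. split. destruct v; auto.
      apply (IHn (i :: v)); auto. split; auto. split; auto.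
      exists z'. rewrite length_app in Hz1. simpl in Hz1. repeat split; auto. lia.
Qed.

Lemma E_GV w n : (n <= N)%nat -> (E d (Omega Sp) Rad n w <-> GV n [] 0 w).
Proof.
  intros Hn. pose proof (G_link w n [] I I) as H. simpl rin in H. rewrite H.
  unfold E. split.
  - intros [v [Hv [Hl Hc]]]. exists v. rewrite app_nil_r. repeat split; auto. apply Cov_CovN; auto; lia.
  - intros [z [Hl [Hv Hc]]]. rewrite app_nil_r in *. exists z. repeat split; auto. apply Cov_CovN; auto; lia.
Qed.

Fixpoint sz (m : nat) : nat := match m with O => O | S m' => S (d * sz m') end.

Fixpoint Sub (n : nat) (v : list nat) : list (list nat) :=
  match n with
  | O => []
  | S m => v :: flat_map (fun i => Sub m (i :: v)) (seq 0 (bch v))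
  end.

Lemma length_flat_map_const {A B} (f : A -> list B) s : forall l, (forall i, length (f i) = s) ->
  length (flat_map f l) = length l * s.
Proof. induction l; intros H; simpl; auto. rewrite length_app, H, IHl; auto. Qed.

Lemma len_Sub m : forall u, u <> [] -> length (Sub m u) = sz m.
Proof.
  induction m; intros u Hu; simpl; auto. f_equal.
  rewrite (length_flat_map_const _ (sz m)). rewrite length_seq. destruct u; [congruence|auto].
  intros; apply IHm; discriminate.
Qed.

Lemma Sub_suffix n : forall v x, In x (Sub n v) -> exists z, x = z ++ v /\ length z < n.
Proof.
  induction n; intros v x H; simpl in H. tauto.
  destruct H as [<-|H]. exists []. simpl; split; auto; lia.
  apply in_flat_map in H. destruct H as [i [_ Hi]]. destruct (IHn _ _ Hi) as [z [-> Hz]].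
  exists (z ++ [i]). rewrite <- app_assoc. simpl. rewrite length_app. simpl. split; auto; lia.
Qed.

Lemma NoDup_flat_map {A B} (f : A -> list B) : forall l, NoDup l -> (forall i, NoDup (f i)) ->
  (forall i j x, i <> j -> In x (f i) -> In x (f j) -> False) -> NoDup (flat_map f l).
Proof.
  induction l as [|a l IH]; intros Hl Hf Hd; simpl. constructor.
  inversion Hl; subst. apply NoDup_app; auto.
  intros x Hx Hx'. apply in_flat_map in Hx'. destruct Hx' as [j [Hj Hxj]].
  apply (Hd a j x); auto. intro; subst; auto.
Qed.

Lemma NoDup_Sub n : forall v, NoDup (Sub n v).
Proof.
  induction n; intros v; simpl. constructor.
  constructor.
  - intro H. apply in_flat_map in H. destruct H as [i [_ Hi]].
    destruct (Sub_suffix _ _ _ Hi) as [z [Hz _]].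
    assert (length v = length (z ++ i :: v)) by (rewrite <- Hz; auto). rewrite length_app in H; simpl in H; lia.
  - apply NoDup_flat_map; auto. apply seq_NoDup.
    intros i j x Hij Hi Hj. destruct (Sub_suffix _ _ _ Hi) as [z [-> _]].
    destruct (Sub_suffix _ _ _ Hj) as [z' [Hz _]].
    replace (z ++ i :: v) with ((z ++ [i]) ++ v) in Hz by (rewrite <- app_assoc; reflexivity).
    replace (z' ++ j :: v) with ((z' ++ [j]) ++ v) in Hz by (rewrite <- app_assoc; reflexivity).
    apply Hij. apply app_inv_tail in Hz. apply app_inj_tail in Hz. destruct Hz; auto.
Qed.

Lemma valid_Sub n : forall v x, valid d v -> In x (Sub n v) -> valid d x.
Proof.
  induction n; intros v x Hv H; simpl in H. tauto.
  destruct H as [<-|H]; auto. apply in_flat_map in H. destruct H as [i [Hi Hx]].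
  apply in_seq in Hi. apply (IHn (i :: v)); auto. split; auto. destruct v; simpl in *; lia.
Qed.

Fixpoint ExB (P : list nat -> Prop) (s c : nat) (ks : list nat) : Prop :=
  match c with
  | O => False
  | S c' => P (firstn s ks) \/ ExB P s c' (skipn s ks)
  end.

Fixpoint PhiG (n c r : nat) (ks : list nat) : Prop :=
  match n with
  | O => True
  | S m => match ks with
           | [] => False
           | k :: rest => 1 <= Nat.max r k /\ ExB (PhiG m d (Nat.max r k - 1)) (sz m) c rest
           end
  end.

Lemma GV_Phi w n : forall v r, GV n v r w <-> PhiG n (bch v) r (map (fun u => tr u w) (Sub n v)).
Proof.
  induction n; intros v r; simpl. tauto.
  apply and_iff_compat_l.
  set (s := Nat.max r (tr v w) - 1).
  assert (Hgen : forall l, ExB (PhiG n d s) (sz n) (length l)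
      (map (fun u => tr u w) (flat_map (fun i => Sub n (i :: v)) l)) <-> exists i, In i l /\ GV n (i :: v) s w).
  { induction l as [|i l IHl]; simpl. split; [tauto|intros [? [[] _]]].
    rewrite map_app.
    assert (Hlen : length (map (fun u => tr u w) (Sub n (i :: v))) = sz n) by
      (rewrite length_map; apply len_Sub; discriminate).
    rewrite <- Hlen at 1. rewrite firstn_app, Nat.sub_diag, firstn_O, app_nil_r, firstn_all.
    rewrite <- Hlen. rewrite skipn_app, Nat.sub_diag, skipn_O, skipn_all. simpl app.
    rewrite Hlen, IHl. change d with (bch (i :: v)) at 1. rewrite <- (IHn (i :: v) s). simpl bch. split.
    intros [H|[j [Hj H]]]. exists i; auto. exists j; auto.
    intros [j [[<-|Hj] H]]; [left|right; exists j]; auto. }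
  pose proof (Hgen (seq 0 (bch v))) as HG. rewrite length_seq in HG. rewrite HG.
  split; intros [i [Hi H]]; exists i; split; auto; apply in_seq in Hi || apply in_seq; lia.
Qed.

End Trunc.

End M5.
Import M5.

Module M6.
Import ListNotations.
Open Scope R_scope.
Import ListNotations.
Open Scope R_scope.

Section Prob.
Variable Sp : ProbSpace.
Variable d : nat.
Variable p : R.
Variable Rad : list nat -> Omega Sp -> nat.
Variable N : nat.
Hypothesis Hp : 0 < p < 1.
Hypothesis HN : (1 <= N)%nat.
Hypothesis Hiid : iid_geometric Sp d p Rad.

Lemma Pr_GV n v r : valid d v ->
  Pr Sp (GV Sp d Rad N n v r) = mu p N (length (Sub d n v)) (PhiG d n (bch d v) r).
Proof.
  intros Hv.
  transitivity (Pr Sp (fun w => Cons Sp Rad N [] w /\ PhiG d n (bch d v) r (map (fun u => tr Sp Rad N u w) (Sub d n v)))).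
  apply Pr_ext. intro w. rewrite (GV_Phi Sp d Rad N). unfold Cons. split; [intros; split; auto|tauto].
  rewrite (cyl Sp d p Rad N Hp HN Hiid). unfold prodq; simpl; ring.
  constructor. apply (NoDup_Sub Sp d Rad). simpl. apply Forall_forall. intros x Hx. eapply (valid_Sub Sp d Rad); eauto.
Qed.

Lemma meas_GV n v r : meas Sp (GV Sp d Rad N n v r).
Proof.
  eapply meas_ext. apply (meas_cyl_tr Sp d p Rad N Hp Hiid (Sub d n v) (PhiG d n (bch d v) r)).
  intro w. rewrite (GV_Phi Sp d Rad N). tauto.
Qed.

Lemma mu_ExB P s c : mu p N (c * s) (ExB P s c) = 1 - (1 - mu p N s P) ^ c.
Proof.
  induction c.
  - change (0 * s)%nat with 0%nat. rewrite (mu_ext p N Hp 0 _ (fun ks => ~ True)) by (intro; simpl; tauto).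
    rewrite (mu_not p N Hp), (mu_True p N Hp). simpl; ring.
  - change (S c * s)%nat with (s + c * s)%nat.
    change (ExB P s (S c)) with (fun ks => P (firstn s ks) \/ ExB P s c (skipn s ks)).
    rewrite (mu_or_prod p N Hp), IHc. simpl; ring.
Qed.

Definition phi (m r : nat) : R := mu p N (sz d m) (PhiG d m d r).

Definition Tstep (c : nat) (f : nat -> R) (r : nat) : R :=
  EW p (fun k => if le_dec 1 (Nat.max r k) then 1 - (1 - f (Nat.max r k - 1)%nat) ^ c else 0) 0 N.

Lemma mu_PhiG_S m c r : mu p N (S (c * sz d m)) (PhiG d (S m) c r) = Tstep c (phi m) r.
Proof.
  simpl mu. unfold Tstep. apply EW_ext. intro k. simpl PhiG.
  destruct (le_dec 1 (Nat.max r k)) as [H|H].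
  - rewrite (mu_ext p N Hp _ _ (ExB (PhiG d m d (Nat.max r k - 1)%nat) (sz d m) c)) by (intro; tauto).
    rewrite mu_ExB. reflexivity.
  - rewrite (mu_ext p N Hp _ _ (fun ks => ~ True)) by (intro; tauto). rewrite (mu_not p N Hp), (mu_True p N Hp). ring.
Qed.

Lemma phi_0 r : phi 0 r = 1.
Proof. unfold phi. simpl. destruct (excluded_middle_informative True); tauto. Qed.

Lemma phi_S m r : phi (S m) r = Tstep d (phi m) r.
Proof. exact (mu_PhiG_S m d r). Qed.

Lemma Pr_E n : (S n <= N)%nat -> Pr Sp (E d (Omega Sp) Rad (S n)) = Tstep (S d) (phi n) 0.
Proof.
  intros Hn. rewrite (Pr_ext Sp _ (GV Sp d Rad N (S n) [] 0)) by (intro; apply E_GV; auto).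
  rewrite Pr_GV by exact I. rewrite <- mu_PhiG_S. f_equal.
  change (S (length (flat_map (fun i => Sub d n [i]) (seq 0 (S d)))) = S (S d * sz d n))%nat. f_equal. rewrite (length_flat_map_const _ (sz d n)). rewrite length_seq. auto.
  intro; apply len_Sub; discriminate.
Qed.

Lemma meas_E n : (n <= N)%nat -> meas Sp (E d (Omega Sp) Rad n).
Proof. intros H. eapply meas_ext. apply (meas_GV n [] 0). intro w; rewrite (E_GV Sp d Rad N w n H); tauto. Qed.

End Prob.

End M6.
Import M6.

Module M7.
Import ListNotations.
Open Scope R_scope.
Import ListNotations.
Open Scope R_scope.

Section Up.
Variable p : R.
Variable N : nat.
Hypothesis Hp : 0 < p < 1.
Variable g : R.
Hypothesis Hg : 1 <= g.
Hypothesis Hpg : p * g < 1.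

Definition T0 (r : nat) : R := p ^ (S r) * g ^ (r - 1) * (g - 1) / (1 - p * g).

Definition Bd (r j : nat) : R :=
  if le_dec j r then p ^ j * g ^ (r - 1) + T0 r else (1 - p) * p ^ j * g ^ (j - 1) / (1 - p * g).

Lemma T0_nonneg r : 0 <= T0 r.
Proof.
  unfold T0. apply Rmult_le_pos. apply Rmult_le_pos. apply Rmult_le_pos.
  apply pow_le; lra. apply pow_le; lra. lra. left; apply Rinv_0_lt_compat; lra.
Qed.

Lemma EW_F_bound r : forall m j, (1 <= r \/ r < j)%nat -> EW p (fun k => g ^ (Nat.max r k - 1)) j m <= Bd r j.
Proof.
  assert (Hinv : 0 < / (1 - p * g)) by (apply Rinv_0_lt_compat; lra).
  assert (Hpj : forall j, 0 < p ^ j) by (intro; apply pow_lt; lra).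
  assert (Hgj : forall j, 0 < g ^ j) by (intro; apply pow_lt; lra).
  induction m; intros j Hrj; simpl EW; unfold Bd.
  - destruct (le_dec j r).
    + replace (Nat.max r j - 1)%nat with (r - 1)%nat by lia. pose proof (T0_nonneg r). lra.
    + replace (Nat.max r j - 1)%nat with (j - 1)%nat by lia.
      pose proof (Hpj j); pose proof (Hgj (j-1)%nat).
      replace ((1 - p) * p ^ j * g ^ (j - 1) / (1 - p * g)) with
        (p ^ j * g ^ (j - 1) + p ^ j * g ^ (j - 1) * p * (g - 1) * / (1 - p * g)) by (field; lra).
      assert (0 <= p ^ j * g ^ (j - 1) * p * (g - 1) * / (1 - p * g)).
      { repeat apply Rmult_le_pos; lra. }
      lra.
  - specialize (IHm (S j) ltac:(lia)). unfold Bd in IHm.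
    destruct (le_dec j r) as [Hj|Hj].
    + replace (Nat.max r j - 1)%nat with (r - 1)%nat by lia.
      destruct (le_dec (S j) r) as [Hj'|Hj'].
      * simpl in IHm. nra.
      * assert (j = r) by lia. subst j.
        replace (S r - 1)%nat with r in IHm by lia.
        assert (E : (1 - p) * p ^ S r * g ^ r / (1 - p * g) = p ^ S r * g ^ (r - 1) + T0 r).
        { unfold T0. destruct r. lia.
          replace (S r - 1)%nat with r by lia. simpl. field. lra. }
        rewrite E in IHm. simpl in IHm |- *. nra.
    + destruct (le_dec (S j) r) as [|_]; [lia|].
      replace (Nat.max r j - 1)%nat with (j - 1)%nat by lia.
      replace (S j - 1)%nat with j in IHm by lia.
      destruct j. lia. replace (S j - 1)%nat with j by lia.
      assert (IHm' : EW p (fun k => g ^ (Nat.max r k - 1)) (S (S j)) m <= (1 - p) * p ^ S (S j) * g ^ S j / (1 - p * g)) by exact IHm.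
      apply Rle_trans with ((1 - p) * p ^ S j * g ^ j + (1 - p) * p ^ S (S j) * g ^ S j / (1 - p * g)).
      lra. right. simpl. field. lra.
Qed.

Lemma EW_ext_ge (f f' : nat -> R) j m : (forall k, (j <= k)%nat -> f k = f' k) -> EW p f j m = EW p f' j m.
Proof. revert j; induction m; intros j H; simpl; rewrite H by lia; [|rewrite (IHm (S j))]; auto. intros; apply H; lia. Qed.

Lemma pow_le1 x n : 0 <= x <= 1 -> x ^ n <= 1.
Proof. intros H. induction n; simpl. lra. nra. Qed.

Variable c : R.
Hypothesis Hc : c = p ^ 2 * g / (1 - p * g).
Hypothesis Hc1 : c < 1.
Hypothesis Hr0 : (1 - p) * p / (1 - p * g) - c * p <= (1 - c) / g.
Hypothesis HN : (1 <= N)%nat.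

Definition Kh (r : nat) : R := EW p (fun k => if le_dec 1 (Nat.max r k) then g ^ (Nat.max r k - 1) - c else 0) 0 N.

Lemma K_bound r : Kh r <= (g ^ r - c) / g.
Proof.
  unfold Kh. destruct r as [|r].
  - destruct N as [|N']; [lia|]. simpl EW.
    rewrite (EW_ext_ge _ (fun k => 1 * g ^ (Nat.max 0 k - 1) + (- c) * 1)).
    rewrite EW_lin, EW_const. pose proof (EW_F_bound 0 N' 1 ltac:(lia)) as HB.
    unfold Bd in HB. destruct (le_dec 1 0); [lia|]. simpl in HB |- *.
    destruct (le_dec 1 0); [lia|]. lra.
    intros k Hk. match goal with |- context [le_dec ?a ?b] => destruct (le_dec a b) end; [simpl; ring|simpl in *; lia].
  - rewrite (EW_ext _ _ (fun k => 1 * g ^ (Nat.max (S r) k - 1) + (- c) * 1)).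
    rewrite EW_lin, EW_const. pose proof (EW_F_bound (S r) N 0 ltac:(lia)) as HB.
    unfold Bd in HB. destruct (le_dec 0 (S r)); [|lia].
    replace (S r - 1)%nat with r in HB by lia. unfold T0 in HB. replace (S r - 1)%nat with r in HB by lia.
    assert (Hpr : (p * g) ^ r <= 1) by (apply pow_le1; split; [apply Rmult_le_pos|]; lra).
    rewrite Rpow_mult_distr in Hpr.
    assert (Hgpos : 0 < g) by lra.
    assert (Key : p ^ S (S r) * g ^ r * (g - 1) / (1 - p * g) <= c - c / g).
    { assert (E1 : c - c / g = p * p * (g - 1) / (1 - p * g)) by (rewrite Hc; field; lra).
      rewrite E1.
      replace (p ^ S (S r) * g ^ r * (g - 1) / (1 - p * g)) with
        ((p ^ r * g ^ r) * (p * p * (g - 1) / (1 - p * g))) by (simpl; field; lra).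
      assert (0 <= p * p * (g - 1) / (1 - p * g)).
      { unfold Rdiv. repeat apply Rmult_le_pos; try lra. left; apply Rinv_0_lt_compat; lra. }
      nra. }
    simpl pow in HB |- *. 
    replace ((g * g ^ r - c) / g) with (g ^ r - c / g) by (field; lra).
    simpl in Key. lra.
    intro k. match goal with |- context [le_dec ?a ?b] => destruct (le_dec a b) end; [ring|lia].
Qed.

End Up.

Lemma bern1 a n : 0 <= a <= 1 -> 1 - INR n * a <= (1 - a) ^ n.
Proof.
  intros H. induction n. simpl; lra. rewrite S_INR. simpl.
  assert (0 <= (1 - a)) by lra. pose proof (pos_INR n). nra.
Qed.

Section Up2.
Variable d : nat.
Variable p : R.
Variable N : nat.
Hypothesis Hp : 0 < p < 1.
Hypothesis HN : (1 <= N)%nat.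
Variable g c : R.
Hypothesis Hg : 1 <= g.
Hypothesis Hpg : p * g < 1.
Hypothesis Hc : c = p ^ 2 * g / (1 - p * g).
Hypothesis Hc1 : c < 1.
Hypothesis Hr0 : (1 - p) * p / (1 - p * g) - c * p <= (1 - c) / g.

Lemma phi_range m r : 0 <= phi d p N m r <= 1.
Proof. unfold phi. split. apply mu_nonneg; auto. apply mu_le1; auto. Qed.

Lemma Tstep_up (c0 : nat) (f : nat -> R) (A : R) r : (forall r, 0 <= f r <= 1) -> 0 <= A ->
  (forall r, f r <= A * (g ^ r - c)) -> Tstep p N c0 f r <= INR c0 * A * ((g ^ r - c) / g).
Proof.
  intros Hf HA Hb. unfold Tstep.
  apply Rle_trans with (EW p (fun k => (INR c0 * A) * (if le_dec 1 (Nat.max r k) then g ^ (Nat.max r k - 1) - c else 0) + 0 * 0) 0 N).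
  - apply EW_mono; auto. intro k. destruct (le_dec 1 (Nat.max r k)).
    + pose proof (bern1 (f (Nat.max r k - 1)%nat) c0 (Hf _)). pose proof (Hb (Nat.max r k - 1)%nat).
      pose proof (pos_INR c0). nra.
    + nra.
  - rewrite EW_lin. fold (Kh p N g c r). assert (KB : Kh p N g c r <= (g ^ r - c) / g) by (eapply K_bound; eauto).
    rewrite EW_const. pose proof (pos_INR c0). 
    assert (0 <= INR c0 * A) by (apply Rmult_le_pos; auto). nra.
Qed.

Lemma phi_up m : forall r, phi d p N m r <= (INR d / g) ^ m / (1 - c) * (g ^ r - c).
Proof.
  assert (Hgr : forall r, 1 - c <= g ^ r - c) by (intro r; pose proof (pow_R1_Rle g r Hg); lra).
  induction m; intros r.
  - rewrite phi_0 by auto. simpl. specialize (Hgr r).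
    replace (1 / (1 - c) * (g ^ r - c)) with ((g ^ r - c) / (1 - c)) by (field; lra).
    apply Rmult_le_reg_r with (1 - c). lra. unfold Rdiv. rewrite Rmult_assoc, Rinv_l by lra. lra.
  - rewrite phi_S by auto.
    assert (HA : 0 <= (INR d / g) ^ m / (1 - c)).
    { unfold Rdiv. apply Rmult_le_pos. apply pow_le. apply Rmult_le_pos. apply pos_INR.
      left; apply Rinv_0_lt_compat; lra. left; apply Rinv_0_lt_compat; lra. }
    eapply Rle_trans. apply Tstep_up. apply phi_range. apply HA. apply IHm.
    right. simpl. field. split; lra.
Qed.

Lemma E_up n : Tstep p N (S d) (phi d p N n) 0 <= INR (S d) * (INR d / g) ^ n / (1 - c) * ((1 - c) / g).
Proof.
  assert (HA : 0 <= (INR d / g) ^ n / (1 - c)).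
  { unfold Rdiv. apply Rmult_le_pos. apply pow_le. apply Rmult_le_pos. apply pos_INR.
    left; apply Rinv_0_lt_compat; lra. left; apply Rinv_0_lt_compat; lra. }
  eapply Rle_trans. apply Tstep_up. apply phi_range. exact HA. apply phi_up.
  simpl. right. unfold Rdiv. ring.
Qed.

End Up2.

End M7.
Import M7.

Module M8.
Import ListNotations.
Open Scope R_scope.
Import ListNotations.
Open Scope R_scope.

Lemma pow_decr x m n : 0 <= x <= 1 -> (m <= n)%nat -> x ^ n <= x ^ m.
Proof.
  intros Hx Hmn. replace n with (m + (n - m))%nat by lia. rewrite pow_add.
  pose proof (pow_le1 x (n - m) Hx). pose proof (pow_le x m (proj1 Hx)).
  nra.
Qed.

Section Series.
Variable d : nat.
Variable p : R.
Hypothesis Hp : 0 < p < 1.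

Definition u : R := INR d * (1 - p).
Fixpoint bb (r : nat) : R := match r with O => p | S r' => p + u * bb r' end.

Fixpoint PS (f : nat -> R) (j n : nat) : R :=
  match n with O => 0 | S n' => (1 - p) * p ^ j * f j + PS f (S j) n' end.

Lemma PS_shift f n : forall j, PS f (S j) n = p * PS (fun k => f (S k)) j n.
Proof. induction n; intros j; simpl. ring. rewrite IHn. ring. Qed.

Lemma PS_lin f g a c n : forall j, PS (fun k => a * f k + c * g k) j n = a * PS f j n + c * PS g j n.
Proof. induction n; intros j; simpl. ring. rewrite IHn. ring. Qed.

Lemma PS_const n : forall j, PS (fun _ => 1) j n = p ^ j * (1 - p ^ n).
Proof. induction n; intros j; simpl. ring. rewrite IHn. simpl. ring. Qed.

Lemma PS_mono f g n : forall j, (forall k, f k <= g k) -> PS f j n <= PS g j n.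
Proof.
  induction n; intros j H; simpl. lra. apply Rplus_le_compat; auto.
  apply Rmult_le_compat_l; auto. apply Rmult_le_pos. lra. apply pow_le; lra.
Qed.

Lemma PS_ext f g n : forall j, (forall k, (j <= k < j + n)%nat -> f k = g k) -> PS f j n = PS g j n.
Proof. induction n; intros j H; simpl; auto. rewrite H by lia. rewrite (IHn (S j)); auto. intros; apply H; lia. Qed.

Hypothesis Hd : (1 <= d)%nat.

Lemma u_nonneg : 0 <= u.
Proof. unfold u. apply Rmult_le_pos. apply pos_INR. lra. Qed.

Lemma bb_ge_p r : p <= bb r.
Proof. induction r; simpl. lra. pose proof u_nonneg. nra. Qed.

Definition Y (K : nat) : R := PS bb 0 (S K).
Definition z : R := p * u.

Lemma Y_rec K : Y (S K) = p * (1 - p ^ (S (S K))) + z * Y K.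
Proof.
  unfold Y. change (PS bb 0 (S (S K))) with ((1 - p) * p ^ 0 * bb 0 + PS bb 1 (S K)).
  rewrite PS_shift. simpl bb at 1.
  rewrite (PS_ext _ (fun k => p * 1 + u * bb k)) by (intros; simpl; ring).
  rewrite PS_lin, PS_const. unfold z. simpl. ring.
Qed.

Fixpoint Zs (J : nat) : R := match J with O => 1 | S J' => 1 + z * Zs J' end.

Lemma z_nonneg : 0 <= z.
Proof. unfold z. pose proof u_nonneg. nra. Qed.

Lemma Y_lower J : forall K, (J <= K)%nat -> p * (1 - p ^ (S K - J)) * Zs J <= Y K.
Proof.
  induction J; intros K HK.
  - simpl Zs. replace (S K - 0)%nat with (S K) by lia. unfold Y.
    assert (E : PS (fun _ => p * 1 + 0 * 1) 0 (S K) = p * (1 - p ^ S K)) by (rewrite PS_lin, PS_const; simpl; ring).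
    rewrite Rmult_1_r, <- E. apply PS_mono. intro k; pose proof (bb_ge_p k); lra.
  - destruct K as [|K']. lia. rewrite Y_rec. specialize (IHJ K' ltac:(lia)).
    replace (S (S K') - S J)%nat with (S K' - J)%nat by lia. simpl Zs.
    pose proof z_nonneg.
    assert (p ^ S (S K') <= p ^ (S K' - J)).
    { apply pow_decr. lra. lia. }
    assert (0 <= Zs J).
    { clear - H Hp Hd. induction J; simpl. lra. nra. }
    assert (p ^ (S K' - J) <= 1) by (apply pow_le1; lra).
    nra.
Qed.

Hypothesis Hcond : INR d * p ^ 2 - 2 * INR d * p + 1 < 0.

Lemma exists_J : exists J, 1 < INR d * p * Zs J.
Proof.
  destruct (Rle_lt_dec 1 z) as [Hz|Hz].
  - exists 0%nat. simpl. unfold z, u in Hz. nra.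
  - assert (HZ : forall J, Zs J * (1 - z) = 1 - z ^ (S J)).
    { induction J; simpl. ring. simpl in IHJ. nra. }
    assert (Hpos : 0 < INR d * p) by (apply Rmult_lt_0_compat; [apply lt_0_INR; lia|lra]).
    assert (Hgap : 0 < (INR d * p + z - 1) / (INR d * p)).
    { apply Rdiv_lt_0_compat; auto. unfold z, u. nra. }
    pose proof z_nonneg.
    destruct (pow_lt_1_zero z ltac:(rewrite Rabs_right; lra) _ Hgap) as [J HJ].
    exists J. specialize (HJ (S J) ltac:(lia)). rewrite Rabs_right in HJ by (apply Rle_ge, pow_le; lra).
    specialize (HZ J).
    assert (E : Zs J = (1 - z ^ S J) / (1 - z)) by (rewrite <- HZ; field; lra).
    rewrite E. apply Rmult_lt_reg_r with (1 - z). lra.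
    replace (INR d * p * ((1 - z ^ S J) / (1 - z)) * (1 - z)) with (INR d * p * (1 - z ^ S J)) by (field; lra).
    apply Rmult_lt_compat_l with (r := INR d * p) in HJ; auto.
    unfold Rdiv in HJ. rewrite <- Rmult_assoc, Rinv_r_simpl_m in HJ by lra. lra.
Qed.

Lemma exists_K : exists K, 1 < INR d * Y K.
Proof.
  destruct exists_J as [J HJ].
  assert (HZ : 0 < Zs J).
  { clear HJ. induction J; simpl. lra. pose proof z_nonneg. nra. }
  assert (Hpos : 0 < INR d * p * Zs J) by lra.
  assert (Hgap : 0 < (INR d * p * Zs J - 1) / (INR d * p * Zs J)) by (apply Rdiv_lt_0_compat; lra).
  destruct (pow_lt_1_zero p ltac:(rewrite Rabs_right; lra) _ Hgap) as [L HL].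
  exists (J + L)%nat. specialize (HL (S L) ltac:(lia)). rewrite Rabs_right in HL by (apply Rle_ge, pow_le; lra).
  pose proof (Y_lower J (J + L) ltac:(lia)) as HY.
  replace (S (J + L) - J)%nat with (S L) in HY by lia.
  assert (E : INR d * (p * (1 - p ^ S L) * Zs J) = INR d * p * Zs J - (INR d * p * Zs J) * p ^ S L) by ring.
  assert ((INR d * p * Zs J) * p ^ S L < INR d * p * Zs J - 1).
  { apply Rmult_lt_compat_l with (r := INR d * p * Zs J) in HL; auto.
    unfold Rdiv in HL. rewrite <- Rmult_assoc, Rinv_r_simpl_m in HL by lra. lra. }
  assert (0 <= INR d) by apply pos_INR.
  nra.
Qed.

End Series.

Lemma EW_nonneg p f j m : 0 < p < 1 -> (forall k, 0 <= f k) -> 0 <= EW p f j m.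
Proof.
  intros Hp Hf. replace 0 with (EW p (fun _ => 0) j m) by (rewrite EW_const; ring).
  apply EW_mono; auto.
Qed.

Lemma PS_le_EW p f n : 0 < p < 1 -> (forall k, 0 <= f k) -> forall m j, (n <= m)%nat -> PS p f j n <= EW p f j m.
Proof.
  intros Hp Hf m. revert n. induction m; intros n j Hn.
  - destruct n; [|lia]. simpl. apply Rmult_le_pos. apply pow_le; lra. auto.
  - destruct n. change (0 <= EW p f j (S m)). apply EW_nonneg; auto. simpl. apply Rplus_le_compat_l. apply IHm. lia.
Qed.

Lemma bern2 a n : 0 <= a <= 1 -> (1 - a) ^ n <= 1 - INR n * a + INR n ^ 2 * a ^ 2.
Proof.
  intros H. induction n. simpl; lra. rewrite S_INR. simpl.
  pose proof (pos_INR n).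
  assert (0 <= 1 - INR n * a + INR n ^ 2 * a ^ 2) by nra.
  simpl in IHn. nra.
Qed.

Section Lower.
Variable d : nat.
Variable p : R.
Variable N K : nat.
Hypothesis Hp : 0 < p < 1.
Hypothesis Hd : (2 <= d)%nat.
Hypothesis HNK : (K + 2 <= N)%nat.
Hypothesis HY : 1 < INR d * Y d p K.

Notation bb := (bb d p).
Notation u := (u d p).

Lemma Hd1 : (1 <= d)%nat. Proof. lia. Qed.

Lemma bb_mono r : bb r <= bb (S r).
Proof.
  pose proof (u_nonneg d p Hp). induction r; simpl. nra. simpl in IHr. nra.
Qed.

Lemma bb_le r s : (r <= s)%nat -> bb r <= bb s.
Proof. intros H; induction H. lra. pose proof (bb_mono m). lra. Qed.

Definition bt (r : nat) : R := bb (Nat.min r K).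
Definition BB : R := bb K.
Definition M0 : R := INR d * p * Y d p K.
Definition dl : R := (M0 - p) / BB.
Definition eps : R := dl / (INR d * BB * (1 + dl)).
Definition tf (r : nat) : R := eps * bt r.

Lemma BB_ge_p : p <= BB.
Proof. apply bb_ge_p; auto. Qed.

Lemma bt_range r : p <= bt r <= BB.
Proof. unfold bt, BB. split. apply bb_ge_p; auto. apply bb_le; lia. Qed.

Lemma bt_mono r s : (r <= s)%nat -> bt r <= bt s.
Proof. intros; unfold bt; apply bb_le; lia. Qed.

Lemma M0_gt : p < M0.
Proof. unfold M0. nra. Qed.

Lemma dl_pos : 0 < dl.
Proof. unfold dl. pose proof M0_gt. pose proof BB_ge_p. apply Rdiv_lt_0_compat; lra. Qed.

Lemma INRd_pos : 0 < INR d.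
Proof. apply lt_0_INR; lia. Qed.

Lemma eps_pos : 0 < eps.
Proof.
  unfold eps. pose proof dl_pos. pose proof BB_ge_p. pose proof INRd_pos.
  apply Rdiv_lt_0_compat; auto. apply Rmult_lt_0_compat. apply Rmult_lt_0_compat; lra. lra.
Qed.

Lemma epsB : INR d * eps * BB = dl / (1 + dl).
Proof. unfold eps. pose proof dl_pos. pose proof BB_ge_p. pose proof INRd_pos. field. repeat split; lra. Qed.

Lemma tf_range r : 0 <= tf r <= eps * BB.
Proof.
  unfold tf. pose proof (bt_range r). pose proof eps_pos. split. nra. apply Rmult_le_compat_l; lra.
Qed.

Lemma tf_le1 r : 0 <= tf r <= 1.
Proof.
  pose proof (tf_range r). pose proof epsB. pose proof dl_pos. pose proof INRd_pos.
  assert (eps * BB <= 1).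
  { assert (dl / (1 + dl) <= 1) by (apply Rmult_le_reg_r with (1 + dl); [lra|]; unfold Rdiv; rewrite Rmult_assoc, Rinv_l; lra).
    assert (1 <= INR d) by (replace 1 with (INR 1) by auto; apply le_INR; lia).
    pose proof eps_pos. pose proof BB_ge_p. nra. }
  lra.
Qed.

Definition F1 (k : nat) : R := if le_dec 1 k then bt (k - 1) else 0.

Lemma M_low : M0 <= INR d * EW p F1 0 N.
Proof.
  unfold M0. rewrite Rmult_assoc. apply Rmult_le_compat_l. left; apply INRd_pos.
  assert (H1 : PS p F1 0 (S (S K)) <= EW p F1 0 N).
  { apply PS_le_EW; auto. intro k. unfold F1. destruct (le_dec 1 k).
    pose proof (bt_range (k-1)); pose proof BB_ge_p; lra. lra. lia. }
  assert (H2 : PS p F1 0 (S (S K)) = p * Y d p K).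
  { change (PS p F1 0 (S (S K))) with ((1 - p) * p ^ 0 * F1 0 + PS p F1 1 (S K)).
    unfold F1 at 1. destruct (le_dec 1 0); [lia|].
    rewrite PS_shift. unfold Y. rewrite Rmult_0_r, Rplus_0_l. f_equal.
    apply PS_ext. intros k Hk. unfold F1. destruct (le_dec 1 (S k)); [|lia].
    unfold bt. f_equal. lia. }
  lra.
Qed.

Definition G (r k : nat) : R := if le_dec 1 (Nat.max r k) then bt (Nat.max r k - 1) else 0.

Lemma G_low r : (1 + dl) * bt r <= INR d * EW p (G r) 0 N.
Proof.
  pose proof M_low. pose proof dl_pos. pose proof BB_ge_p. pose proof INRd_pos.
  set (L0 := fun k : nat => if Nat.eq_dec k 0 then (if le_dec 1 r then bt (r - 1) else 0) else 0).
  assert (HGL : EW p (fun k => 1 * L0 k + 1 * F1 k) 0 N <= EW p (G r) 0 N).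
  { apply EW_mono; auto. intro k. unfold L0, F1, G. destruct (Nat.eq_dec k 0).
    - subst. replace (Nat.max r 0) with r by lia. destruct (le_dec 1 0); [lia|]. destruct (le_dec 1 r); lra.
    - destruct (le_dec 1 k); [|lia]. destruct (le_dec 1 (Nat.max r k)); [|lia].
      pose proof (bt_mono (k - 1) (Nat.max r k - 1) ltac:(lia)). lra. }
  rewrite EW_lin in HGL.
  assert (HL0 : EW p L0 0 N = (1 - p) * (if le_dec 1 r then bt (r - 1) else 0)).
  { destruct N as [|N']; [lia|]. simpl. unfold L0 at 1. simpl.
    rewrite (EW_ext_ge p _ (fun _ => 0)). rewrite EW_const. ring.
    intros k Hk. unfold L0. destruct (Nat.eq_dec k 0); [lia|auto]. }
  rewrite HL0 in HGL.
  assert (Hdl : forall x, 0 <= x <= BB -> dl * x <= M0 - p).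
  { intros x Hx. unfold dl. apply Rle_trans with ((M0 - p) / BB * BB).
    pose proof M0_gt. apply Rmult_le_compat_l. unfold Rdiv; apply Rmult_le_pos; [lra|left; apply Rinv_0_lt_compat; lra]. lra.
    right; field; lra. }
  destruct r as [|r].
  - destruct (le_dec 1 0); [lia|]. unfold bt. simpl bb.
    pose proof (Hdl p ltac:(lra)). nra.
  - destruct (le_dec 1 (S r)); [|lia]. replace (S r - 1)%nat with r in HGL by lia.
    assert (Hb : bt (S r) <= p + u * bt r).
    { unfold bt. destruct (le_dec (S r) K).
      - replace (Nat.min (S r) K) with (S r) by lia. replace (Nat.min r K) with r by lia. simpl. lra.
      - replace (Nat.min (S r) K) with K by lia. replace (Nat.min r K) with K by lia.
        pose proof (bb_mono K). simpl in H3. lra. }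
    pose proof (Hdl (bt (S r)) ltac:(pose proof (bt_range (S r)); lra)).
    unfold u in Hb. nra.
Qed.

Lemma Tstep_low r : tf r <= Tstep p N d tf r.
Proof.
  pose proof eps_pos. pose proof epsB. pose proof dl_pos. pose proof INRd_pos.
  unfold Tstep.
  apply Rle_trans with (EW p (fun k => ((1 - INR d * eps * BB) * INR d * eps) * G r k + 0 * 0) 0 N).
  - rewrite EW_lin. pose proof (G_low r). rewrite H0.
    replace (1 - dl / (1 + dl)) with (1 / (1 + dl)) by (field; lra).
    unfold tf. rewrite EW_const.
    apply Rle_trans with (eps * (1 / (1 + dl)) * ((1 + dl) * bt r)).
    right. field. lra. 
    assert (0 <= eps * (1 / (1 + dl))).
    { apply Rmult_le_pos. lra. unfold Rdiv. rewrite Rmult_1_l. left; apply Rinv_0_lt_compat; lra. }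
    nra.
  - apply EW_mono; auto. intro k. unfold G.
    destruct (le_dec 1 (Nat.max r k)).
    + set (a := tf (Nat.max r k - 1)). pose proof (tf_range (Nat.max r k - 1)). fold a in H3.
      pose proof (tf_le1 (Nat.max r k - 1)). fold a in H4.
      pose proof (bern2 a d H4).
      assert (a = eps * bt (Nat.max r k - 1)) by reflexivity.
      assert (INR d * a <= INR d * eps * BB) by (rewrite Rmult_assoc; apply Rmult_le_compat_l; lra).
      replace ((1 - INR d * eps * BB) * INR d * eps * bt (Nat.max r k - 1) + 0 * 0) with
        ((1 - INR d * eps * BB) * (INR d * a)) by (rewrite H6; ring).
      assert (0 <= INR d * a) by (apply Rmult_le_pos; lra).
      assert (0 <= (INR d * eps * BB - INR d * a) * (INR d * a)) by (apply Rmult_le_pos; lra).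
      replace (INR d ^ 2 * a ^ 2) with ((INR d * a) * (INR d * a)) in H5 by ring.
      nra.
    + lra.
Qed.

Lemma Tstep_mono c f f' r : (forall r, 0 <= f' r <= f r) -> (forall r, f r <= 1) ->
  Tstep p N c f' r <= Tstep p N c f r.
Proof.
  intros H1 H2. unfold Tstep. apply EW_mono; auto. intro k.
  destruct (le_dec 1 (Nat.max r k)); [|lra].
  specialize (H1 (Nat.max r k - 1)%nat). specialize (H2 (Nat.max r k - 1)%nat).
  assert ((1 - f (Nat.max r k - 1)%nat) ^ c <= (1 - f' (Nat.max r k - 1)%nat) ^ c) by (apply pow_incr; lra).
  lra.
Qed.

Lemma Tstep_S c f r : (forall r, 0 <= f r <= 1) -> Tstep p N c f r <= Tstep p N (S c) f r.
Proof.
  intros H. unfold Tstep. apply EW_mono; auto. intro k.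
  destruct (le_dec 1 (Nat.max r k)); [|lra].
  specialize (H (Nat.max r k - 1)%nat). simpl.
  assert (0 <= (1 - f (Nat.max r k - 1)%nat) ^ c) by (apply pow_le; lra). nra.
Qed.

Lemma phi_low m : forall r, tf r <= phi d p N m r.
Proof.
  induction m; intros r.
  - rewrite phi_0 by auto. apply tf_le1.
  - rewrite phi_S by auto. eapply Rle_trans. apply Tstep_low.
    apply Tstep_mono. intro r'. split. apply tf_le1. auto.
    intro; apply phi_range; auto.
Qed.

Lemma E_low n : eps * p <= Tstep p N (S d) (phi d p N n) 0.
Proof.
  apply Rle_trans with (tf 0). unfold tf, bt. simpl. lra.
  eapply Rle_trans. apply Tstep_low. eapply Rle_trans. apply Tstep_S. apply tf_le1.
  apply Tstep_mono. intro r'. split. apply tf_le1. apply phi_low.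
  intro; apply phi_range; auto.
Qed.

End Lower.

End M8.
Import M8.

Open Scope R_scope.
Open Scope R_scope.

Lemma cv_le (u : nat -> R) l a : Un_cv u l -> (forall n, u n <= a) -> l <= a.
Proof.
  intros H Hu. destruct (Rle_lt_dec l a) as [|Hl]; auto.
  destruct (H (l - a)) as [n Hn]. lra. specialize (Hn n (le_n n)). specialize (Hu n).
  unfold R_dist in Hn. rewrite Rabs_left1 in Hn by lra. lra.
Qed.

Theorem mainTheorem8 (d : nat) (p : R) (S : ProbSpace)
    (Rad : list nat -> Omega S -> nat) :
  (2 <= d)%nat -> 0 < p < 1 -> iid_geometric S d p Rad ->
  (INR d * p ^ 2 - 2 * INR d * p + 1 < 0 -> Pr S (V_event d (Omega S) Rad) > 0) /\
  (2 * p * INR d <= 1 -> Pr S (V_event d (Omega S) Rad) = 0).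
Proof.
  intros Hd Hp Hiid.
  set (EE := fun n => E d (Omega S) Rad n).
  assert (HmE : forall n, meas S (EE n)) by (intro n; apply (meas_E S d p Rad n Hp Hiid n); lia).
  assert (HV : Pr S (V_event d (Omega S) Rad) = Pr S (fun w => forall n, EE n w))
    by (apply Pr_ext; intro w; apply V_iff).
  assert (HmV : meas S (fun w => forall n, EE n w)) by (apply meas_all; auto).
  assert (Hdpos : 2 <= INR d) by (replace 2 with (INR 2) by (simpl; ring); apply le_INR; auto).
  split.
  - intros Hcond.
    destruct (exists_K d p Hp ltac:(lia) Hcond) as [K HK].
    set (a := eps d p K * p).
    assert (Ha : 0 < a) by (apply Rmult_lt_0_compat; [apply (eps_pos d p (K + 2) K); auto|lra]).
    assert (HES : forall n, a <= Pr S (EE (Datatypes.S n))).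
    { intro n. unfold EE. rewrite (Pr_E S d p Rad (n + K + 2) Hp ltac:(lia) Hiid n ltac:(lia)).
      apply (E_low d p (n + K + 2) K Hp Hd ltac:(lia) HK n). }
    assert (HEn : forall n, a <= Pr S (EE n)).
    { intro n. eapply Rle_trans. apply (HES n). apply Pr_mono; auto. intro w; apply E_dec. }
    assert (Hcv := Pr_cont_below S (fun n w => ~ EE n w) (fun n => meas_not S _ (HmE n))
      (fun n w H H' => H (E_dec d (Omega S) Rad n w H'))).
    assert (Hle : Pr S (fun w => exists n, ~ EE n w) <= 1 - a).
    { apply (cv_le _ _ _ Hcv). intro n. rewrite Pr_compl by auto. specialize (HEn n). lra. }
    rewrite HV. rewrite (Pr_ext S _ (fun w => ~ (exists n, ~ EE n w))).
    rewrite Pr_compl. lra. apply meas_ex. intro n; apply meas_not; auto.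
    intro w. split. intros H [n Hn]; auto. intros H n. apply NNPP. intro; apply H; eauto.
  - intros Hcond.
    assert (Hp4 : p <= / 4) by nra.
    set (y := / 2 + p / 8).
    set (g := y / p).
    set (c := p ^ 2 * g / (1 - p * g)).
    assert (Hpg : p * g = y) by (unfold g; field; lra).
    assert (Hg : 1 <= g) by (unfold g; apply Rmult_le_reg_r with p; [lra|]; unfold Rdiv; rewrite Rmult_assoc, Rinv_l by lra; unfold y; lra).
    assert (Hy : / 2 < y < 1) by (unfold y; lra).
    assert (Hc' : c = p * y / (1 - y)) by (unfold c; rewrite Hpg; unfold g; field; lra).
    assert (Hc1 : c < 1).
    { rewrite Hc'. apply Rmult_lt_reg_r with (1 - y). lra. unfold Rdiv. rewrite Rmult_assoc, Rinv_l by lra. unfold y in *. nra. }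
    assert (Hr0 : (1 - p) * p / (1 - p * g) - c * p <= (1 - c) / g).
    { rewrite Hpg, Hc'. unfold g.
      assert (E : (1 - p * y / (1 - y)) / (y / p) - ((1 - p) * p / (1 - y) - p * y / (1 - y) * p) =
                  p * (1 - 2 * y + p * y ^ 2) / (y * (1 - y))) by (field; repeat split; lra).
      assert (0 <= p * (1 - 2 * y + p * y ^ 2) / (y * (1 - y))).
      { unfold Rdiv. apply Rmult_le_pos. apply Rmult_le_pos. lra. unfold y. nra.
        left; apply Rinv_0_lt_compat; nra. }
      lra. }
    assert (Hq : 0 <= INR d / g < 1).
    { split. unfold Rdiv. apply Rmult_le_pos. apply pos_INR. left; apply Rinv_0_lt_compat; lra.
      unfold g. replace (INR d / (y / p)) with (INR d * p / y) by (field; lra).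
      apply Rmult_lt_reg_r with y. lra. unfold Rdiv. rewrite Rmult_assoc, Rinv_l by lra. lra. }
    assert (Hbd : forall n, Pr S (fun w => forall n, EE n w) <= INR (Datatypes.S d) * (INR d / g) ^ n / (1 - c) * ((1 - c) / g)).
    { intro n. eapply Rle_trans. apply (Pr_mono S _ (EE (Datatypes.S n))); auto.
      unfold EE. rewrite (Pr_E S d p Rad (Datatypes.S n) Hp ltac:(lia) Hiid n ltac:(lia)).
      apply (E_up d p (Datatypes.S n) Hp ltac:(lia) g c Hg ltac:(lra) eq_refl Hc1 Hr0 n). }
    assert (H0 : Pr S (fun w => forall n, EE n w) <= 0).
    { destruct (Rle_lt_dec (Pr S (fun w => forall n, EE n w)) 0) as [|Hpos]; auto.
      set (C := INR (Datatypes.S d) / g).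
      assert (HC : 0 < C) by (unfold C; apply Rdiv_lt_0_compat; [apply lt_0_INR; lia|lra]).
      destruct (pow_lt_1_zero (INR d / g) ltac:(rewrite Rabs_right; lra) (Pr S (fun w => forall n, EE n w) / C)
        ltac:(apply Rdiv_lt_0_compat; auto)) as [n Hn].
      specialize (Hn n (le_n n)). rewrite Rabs_right in Hn by (apply Rle_ge, pow_le; lra).
      specialize (Hbd n).
      replace (INR (Datatypes.S d) * (INR d / g) ^ n / (1 - c) * ((1 - c) / g)) with (C * (INR d / g) ^ n) in Hbd
        by (unfold C; field; split; lra).
      apply Rmult_lt_compat_l with (r := C) in Hn; auto.
      replace (C * (Pr S (fun w => forall n, EE n w) / C)) with (Pr S (fun w => forall n, EE n w)) in Hn by (field; lra).
      lra. }
    rewrite HV. pose proof (Pr_nonneg S _ HmV). lra.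
Qed.
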